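(* Let $2\le 2k<n$ and let $v=v(t)>0$ be a smooth function on $\mathbb R$, viewed as a function on $\mathbb R\times\mathbb S^{n-1}$, and set $g_v=v^{4k/(n-2k)}g_{cyl}$ and $h(t)=v(t)^2-\big(\frac{2k}{n-2k}\big)^2\dot v(t)^2$. Assume $h_0:=h(0)>0$. Then $v$ solves $\sigma_k(B_{g_v})=0$ on $\mathbb R\times\mathbb S^{n-1}$ if and only if $v(t)=\sqrt{h_0}\cosh\big(\frac{n-2k}{2k}t-c\big)$ for some $c\in\mathbb R$.
   Context: $g_{cyl}=dt^2+d\theta^2$ is the product metric on $\mathbb R\times\mathbb S^{n-1}$ with $d\theta^2$ the round metric. For a metric $g$, $A_g=\frac1{n-2}(\mathrm{Ric}_g-\frac{R_g}{2(n-1)}g)$ is its Schouten tensor, and $B_{g_v}=\frac{n-2k}{2k}v^{2n/(n-2k)}g_v^{-1}A_{g_v}$ (a symmetric endomorphism); $\sigma_k$ denotes the $k$-th elementary symmetric function of its eigenvalues. *)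

(* Defs.v *)
From Stdlib Require Import Reals Lra List ClassicalEpsilon.
Import ListNotations.
Open Scope R_scope.

Fixpoint sumR (n : nat) (f : nat -> R) : R :=
  match n with O => 0 | S m => sumR m f + f m end.

(* derivative of f : R -> R at t (the unique l with derivable_pt_lim f t l
   when f is differentiable at t; an arbitrary value otherwise) *)
Definition der (f : R -> R) (t : R) : R :=
  epsilon (inhabits 0) (fun l => derivable_pt_lim f t l).

Definition smooth (v : R -> R) : Prop :=
  exists D : nat -> R -> R,
    D O = v /\ forall m t, derivable_pt_lim (D m) t (D (S m) t).

(* points of R^n : only the coordinates 0..n-1 are used *)
Definition vec := nat -> R.
Definition upd (x : vec) (i : nat) (s : R) : vec :=
  fun j => if Nat.eqb j i then s else x j.

Definition pd (i : nat) (F : vec -> R) (x : vec) : R :=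
  der (fun s => F (upd x i s)) (x i).

Definition normsq (n : nat) (x : vec) : R := sumR n (fun i => x i ^ 2).

Definition mat := nat -> nat -> R.

(* determinant of the submatrix with rows [rows] and columns [cols]
   (Laplace expansion along the first row) *)
Fixpoint detl (M : mat) (rows cols : list nat) {struct rows} : R :=
  match rows with
  | nil => 1
  | r :: rs =>
      (fix go (pre post : list nat) (sgn : R) {struct post} : R :=
         match post with
         | nil => 0
         | c :: post' =>
             sgn * M r c * detl M rs (pre ++ post') + go (pre ++ [c]) post' (- sgn)
         end) nil cols 1
  end.

Definition idx (n : nat) : list nat := seq 0 n.
Definition idx_wo (n j : nat) : list nat :=
  filter (fun a => negb (Nat.eqb a j)) (seq 0 n).

Definition det (n : nat) (M : mat) : R := detl M (idx n) (idx n).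

Definition minv (n : nat) (M : mat) : mat :=
  fun i j => (-1) ^ (i + j) * detl M (idx_wo n j) (idx_wo n i) / det n M.

Fixpoint subsets (k : nat) (l : list nat) : list (list nat) :=
  match k, l with
  | O, _ => [nil]
  | S _, nil => nil
  | S k', a :: l' => map (cons a) (subsets k' l') ++ subsets k l'
  end.

(* sigma_k of the eigenvalues of the endomorphism M of R^n, i.e. the sum of
   its principal k x k minors (the coefficient of s^k in det(I + s M)) *)
Definition sigmak (n k : nat) (M : mat) : R :=
  fold_right (fun S acc => detl M S S + acc) 0 (subsets k (idx n)).

Definition metric := vec -> mat.

Definition Gam (n : nat) (g : metric) (x : vec) (m i j : nat) : R :=
  / 2 * sumR n (fun l => minv n (g x) m l *
     (pd i (fun y => g y j l) x + pd j (fun y => g y i l) x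
      - pd l (fun y => g y i j) x)).

Definition Ric (n : nat) (g : metric) (x : vec) (i j : nat) : R :=
  sumR n (fun m =>
    pd m (fun y => Gam n g y m i j) x - pd j (fun y => Gam n g y m i m) x
    + sumR n (fun l => Gam n g x m m l * Gam n g x l i j
                       - Gam n g x m j l * Gam n g x l i m)).

Definition Scal (n : nat) (g : metric) (x : vec) : R :=
  sumR n (fun i => sumR n (fun j => minv n (g x) i j * Ric n g x i j)).

Definition Schouten (n : nat) (g : metric) (x : vec) (i j : nat) : R :=
  / (INR n - 2) * (Ric n g x i j - Scal n g x / (2 * (INR n - 1)) * g x i j).

(* We use the global chart R^n \ {0} of the cylinder given by
   (t, theta) |-> e^t theta; in it g_cyl = dt^2 + dtheta^2 = |x|^{-2} delta,
   and t = ln |x|. *)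
Definition tcoord (n : nat) (x : vec) : R := ln (sqrt (normsq n x)).

Definition gcyl (n : nat) : metric :=
  fun x i j => if Nat.eqb i j then / normsq n x else 0.

Definition gv (n k : nat) (v : R -> R) : metric :=
  fun x i j =>
    Rpower (v (tcoord n x)) (4 * INR k / (INR n - 2 * INR k)) * gcyl n x i j.

Definition Bv (n k : nat) (v : R -> R) (x : vec) : mat :=
  fun i j =>
    (INR n - 2 * INR k) / (2 * INR k)
    * Rpower (v (tcoord n x)) (2 * INR n / (INR n - 2 * INR k))
    * sumR n (fun l => minv n (gv n k v x) i l * Schouten n (gv n k v) x l j).

Definition hfun (n k : nat) (v : R -> R) (t : R) : R :=
  v t ^ 2 - (2 * INR k / (INR n - 2 * INR k)) ^ 2 * der v t ^ 2.

(* Main.v *)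
Require Import Defs.
From Stdlib Require Import Reals Lra Lia List FunctionalExtensionality ClassicalEpsilon.
Import ListNotations.
Open Scope R_scope.

Definition mygo (f : list nat -> R) (a : nat -> R) :=
  fix go (pre post : list nat) (sgn : R) {struct post} : R :=
  match post with
  | nil => 0
  | c :: post' => sgn * a c * f (pre ++ post') + go (pre ++ [c]) post' (- sgn)
  end.

Lemma detl_cons M r rs cols : detl M (r :: rs) cols = mygo (detl M rs) (M r) nil cols 1.
Proof.
  reflexivity.
Qed.

Fixpoint remj (j : nat) (l : list nat) {struct l} : list nat :=
  match l with
  | nil => nil
  | a :: l' => match j with O => l' | S j' => a :: remj j' l' end
  end.

Lemma sumR_shift m f : sumR (S m) f = f O + sumR m (fun j => f (S j)).
Proof.
  induction m; simpl; [ring|]. simpl in IHm. rewrite IHm. ring.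
Qed.

Lemma sumR_ext m f g : (forall j, (j < m)%nat -> f j = g j) -> sumR m f = sumR m g.
Proof.
  induction m; intros H; simpl; auto. rewrite IHm by (intros; apply H; lia). rewrite H by lia; auto.
Qed.

Lemma sumR_scal m c f : sumR m (fun j => c * f j) = c * sumR m f.
Proof. induction m; simpl; [ring|]. rewrite IHm; ring. Qed.

Lemma mygo_sum f a post : forall pre sgn,
  mygo f a pre post sgn =
  sgn * sumR (length post) (fun j => (-1) ^ j * a (nth j post 0%nat) * f (pre ++ remj j post)).
Proof.
  induction post as [|c cs IH]; intros pre sgn; [simpl; ring|].
  change (mygo f a pre (c :: cs) sgn) with
    (sgn * a c * f (pre ++ cs) + mygo f a (pre ++ [c]) cs (- sgn)).
  change (length (c :: cs)) with (S (length cs)).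
  rewrite sumR_shift. rewrite IH.
  replace (sumR (length cs) (fun j : nat => (-1) ^ j * a (nth j cs 0%nat) * f ((pre ++ [c]) ++ remj j cs)))
    with (-1 * sumR (length cs) (fun j : nat => (-1) ^ S j * a (nth (S j) (c :: cs) 0%nat) * f (pre ++ remj (S j) (c :: cs)))).
  { simpl. ring. }
  rewrite <- sumR_scal. apply sumR_ext. intros. simpl. rewrite <- app_assoc. simpl. ring.
Qed.

Definition dl (a b : nat) : R := if Nat.eqb a b then 1 else 0.

Lemma remj_incl j l c : In c (remj j l) -> In c l.
Proof.
  revert j; induction l as [|a l IH]; intros j H; simpl in *; auto.
  destruct j; auto. simpl in H. destruct H; eauto.
Qed.

Lemma length_remj j l : (j < length l)%nat -> length (remj j l) = pred (length l).
Proof.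
  revert j; induction l as [|a l IH]; intros j H; simpl in *; [lia|].
  destruct j; auto. simpl. rewrite IH by lia. destruct l; simpl in *; lia.
Qed.

Lemma detl_zero_row M rows : forall cols r, In r rows -> (forall c, In c cols -> M r c = 0) ->
  detl M rows cols = 0.
Proof.
  induction rows as [|r' rs IH]; intros cols r Hr Hc; [destruct Hr|].
  rewrite detl_cons, mygo_sum.
  - rewrite Rmult_1_l.
    transitivity (sumR (length cols) (fun _ => 0)).
    + apply sumR_ext. intros j Hj. destruct Hr as [<-|Hr].
      * rewrite Hc. ring. apply nth_In. auto.
      * rewrite (IH _ r Hr). ring. intros c Hc'. apply Hc. eapply remj_incl; eauto.
    + clear. induction (length cols); simpl; auto. rewrite IHn; ring.
Qed.

Lemma detl_ext M M' rows : forall cols, (forall r c, In r rows -> In c cols -> M r c = M' r c) ->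
  detl M rows cols = detl M' rows cols.
Proof.
  induction rows as [|r rs IH]; intros cols H; [reflexivity|].
  rewrite !detl_cons, !mygo_sum. f_equal. apply sumR_ext. intros j Hj.
  rewrite H. rewrite (IH (nil ++ remj j cols)). auto.
  - intros r0 c Hr Hc. apply H. right; auto. simpl in Hc. eapply remj_incl; eauto.
  - left; auto.
  - apply nth_In; auto.
Qed.

Lemma size_remj j l : (j < length l)%nat -> length (remj j l) = pred (length l).
Proof.
  revert j; induction l as [|a l IH]; intros j H; simpl in *; [lia|].
  destruct j; auto. simpl. rewrite IH by lia. destruct l; simpl in *; lia.
Qed.

Lemma nth_remj j l i : nth i (remj j l) 0%nat = nth (if (i <? j)%nat then i else S i) l 0%nat.
Proof.
  revert j i; induction l as [|a l IH]; intros j i.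
  - simpl. destruct (i <? j)%nat; destruct i; reflexivity.
  - destruct j as [|j].
    + simpl. destruct i; reflexivity.
    + destruct i as [|i]; [reflexivity|].
      cbn [remj nth]. rewrite IH.
      destruct (Nat.ltb_spec i j); destruct (Nat.ltb_spec (S i) (S j)); try lia; reflexivity.
Qed.

Module MC.
From mathcomp Require Import all_boot all_algebra.
From mathcomp Require Import Rstruct ring lra.
Import GRing.Theory.
Local Open Scope ring_scope.

Lemma sum_ord_sumR m (F : nat -> R) : \sum_(j < m) F j = sumR m F.
Proof.
  elim: m => [|m IH]; first by rewrite big_ord0.
  by rewrite big_ord_recr /= IH.
Qed.

Lemma sumR_ord m (F : nat -> R) : sumR m F = \sum_(j < m) F j.
Proof. by rewrite sum_ord_sumR. Qed.

Definition subm (M : mat) (rows cols : list nat) m : 'M[R]_m :=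
  \matrix_(i < m, j < m) M (List.nth (nat_of_ord i) rows 0%N) (List.nth (nat_of_ord j) cols 0%N).

Lemma detl_det M rows : forall cols, length rows = length cols ->
  detl M rows cols = \det (subm M rows cols (length rows)).
Proof.
  elim: rows => [|r rs IH] cols Hl.
  - by rewrite det_mx00.
  - rewrite detl_cons mygo_sum (expand_det_row _ ord0). rewrite Rmult_1_l -Hl. rewrite sumR_ord.
    apply: eq_bigr. move=> j.
    have Hj : (j < length cols)%N by rewrite -Hl ltn_ord.
    move=> _.
    have Hs : length rs = length (remj j cols).
      by rewrite size_remj -?Hl //; apply/ltP.
    rewrite /cofactor RpowE (IH _ Hs) /= !mxE.
    have -> : subm M rs (remj j cols) (length rs) = row' ord0 (col' j (subm M (r :: rs) cols (length rs).+1)).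
      apply/matrixP => a b; rewrite !mxE /= nth_remj /bump.
      case: (Nat.ltb_spec b j) => Hb.
      - have -> : (j <= b)%N = false by apply/negbTE; rewrite -ltnNge; apply/ltP.
        by rewrite add0n.
      - have -> : (j <= b)%N = true by apply/leP; lia.
        by rewrite add1n.
    by rewrite !RmultE add0n mulrCA mulrA.
Qed.
Lemma det_1rank1 m (nu : R) (c : 'cV[R]_m) :
  \det (1%:M + nu *: (c *m c^T)) = 1 + nu * (c^T *m c) 0 0.
Proof.
  set P := block_mx (1%:M : 'M[R]_1) (- (nu *: c^T)) c (1%:M : 'M[R]_m).
  have E1 : P = block_mx 1%:M 0 c 1%:M *m block_mx 1%:M (- (nu *: c^T)) 0 (1%:M + nu *: (c *m c^T)).
    rewrite mulmx_block !mulmx1 !mul1mx ?mulmx0 ?mul0mx ?addr0 ?add0r.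
    by rewrite mulmxN scalemxAr addrCA addNr addr0.
  have E2 : P = block_mx (1%:M + nu *: (c^T *m c)) (- (nu *: c^T)) 0 1%:M *m block_mx 1%:M 0 c 1%:M.
    rewrite mulmx_block !mulmx1 !mul1mx ?mulmx0 ?mul0mx ?addr0 ?add0r.
    by rewrite mulNmx scalemxAl addrK.
  have := congr1 determinant E1; rewrite E2 !det_mulmx !det_lblock !det_ublock.
  rewrite !det1 !mul1r ?mulr1 => H; rewrite -H.
  by rewrite det_mx11 !mxE /= mulr1n.
Qed.

Local Close Scope ring_scope.
Lemma minor_rank1 (lam mu : R) (u : nat -> R) (S : list nat) :
  List.NoDup S -> lam <> 0 ->
  detl (fun i j => (if Nat.eqb i j then lam else 0) + mu * u i * u j) S S
  = lam ^ length S * (1 + mu / lam * sumR (length S) (fun i => u (List.nth i S 0%N) ^ 2)).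
Proof.
  Local Open Scope ring_scope.
  move=> HS Hl.
  rewrite detl_det //.
  set m := length S.
  set c : 'cV[R]_m := \col_(i < m) u (List.nth (nat_of_ord i) S 0%N).
  have -> : subm (fun i j => ((if Nat.eqb i j then lam else 0) + mu * u i * u j)%R) S S m
     = lam *: (1%:M + (mu / lam) *: (c *m c^T)).
    apply/matrixP => i j.
    rewrite !mxE big_ord1 !mxE.
    have -> : Nat.eqb (List.nth i S 0%N) (List.nth j S 0%N) = (i == j).
      case: (Nat.eqb_spec (List.nth i S 0%N) (List.nth j S 0%N)) => H.
      - have := proj1 (List.NoDup_nth S 0%N) HS i j (ltP (ltn_ord i)) (ltP (ltn_ord j)) H.
        by move=> /ord_inj ->; rewrite eqxx.
      - by case: eqP => // E; rewrite E in H.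
    have Hl' : lam != 0 by apply/eqP.
    rewrite ?RplusE ?RmultE mulrDr; congr (_ + _); last by field.
    by case: (i == j); rewrite /= ?mulr1n ?mulr0n ?mulr1 ?mulr0.
  rewrite detZ det_1rank1 ?RpowE ?RplusE ?RmultE ?RdivE.
  congr (_ * (_ + _ * _)).
  rewrite mxE sumR_ord. apply: eq_bigr => i _.
  by rewrite !mxE RpowE expr2.
Qed.

End MC.

Lemma idx_wo_In n j c : In c (idx_wo n j) <-> (c < n)%nat /\ c <> j.
Proof.
  unfold idx_wo. rewrite filter_In, in_seq. rewrite Bool.negb_true_iff, Nat.eqb_neq. lia.
Qed.

Lemma idx_wo_NoDup n j : NoDup (idx_wo n j).
Proof. unfold idx_wo. apply NoDup_filter. apply seq_NoDup. Qed.

Lemma idx_wo_length n j : (j < n)%nat -> length (idx_wo n j) = pred n.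
Proof.
  unfold idx_wo. induction n; intros H; [lia|].
  rewrite seq_S, filter_app. rewrite length_app. simpl.
  destruct (Nat.eq_dec j n) as [->|Hne].
  - rewrite Nat.eqb_refl. simpl.
    assert (forall m, (m <= n)%nat -> length (filter (fun a => negb (Nat.eqb a n)) (seq 0 m)) = m).
    { induction m; intros Hm; auto. rewrite seq_S, filter_app, length_app. simpl.
      replace (Nat.eqb m n) with false by (symmetry; apply Nat.eqb_neq; lia). simpl. rewrite IHm by lia. lia. }
    rewrite H0; auto. lia.
  - replace (Nat.eqb n j) with false by (symmetry; apply Nat.eqb_neq; lia). simpl.
    rewrite IHn by lia. destruct n; lia.
Qed.

Lemma detl_diag (a : R) (S : list nat) : NoDup S -> a <> 0 ->
  detl (fun r c => if Nat.eqb r c then a else 0) S S = a ^ length S.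
Proof.
  intros HS Ha.
  rewrite (detl_ext _ (fun r c => (if Nat.eqb r c then a else 0) + 0 * (fun _ => 0) r * (fun _ => 0) c)).
  - rewrite MC.minor_rank1 by auto. field. auto.
  - intros; ring.
Qed.

Lemma minv_diag n a i j : a <> 0 -> (i < n)%nat -> (j < n)%nat ->
  minv n (fun r c => if Nat.eqb r c then a else 0) i j = dl i j * / a.
Proof.
  intros Ha Hi Hj. unfold minv, det, dl.
  destruct (Nat.eqb_spec i j) as [<-|Hne].
  - rewrite !detl_diag; try apply idx_wo_NoDup; auto.
    2:{ unfold idx. apply seq_NoDup. }
    rewrite idx_wo_length by auto. unfold idx; rewrite length_seq.
    replace (i + i)%nat with (2 * i)%nat by lia. rewrite pow_1_even.
    destruct n; [lia|]. simpl. field. split; auto. apply pow_nonzero; auto.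
  - rewrite (detl_zero_row _ _ _ i).
    + unfold Rdiv. ring.
    + apply idx_wo_In. lia.
    + intros c Hc. apply idx_wo_In in Hc. replace (Nat.eqb i c) with false; auto.
      symmetry; apply Nat.eqb_neq; lia.
Qed.

Lemma dl_refl a : dl a a = 1.
Proof. unfold dl; rewrite Nat.eqb_refl; auto. Qed.
Lemma dl_sym a b : dl a b = dl b a.
Proof. unfold dl; rewrite Nat.eqb_sym; auto. Qed.

Lemma sumR_plus m f g : sumR m (fun j => f j + g j) = sumR m f + sumR m g.
Proof. induction m; simpl; [ring|]. rewrite IHm; ring. Qed.
Lemma sumR_minus m f g : sumR m (fun j => f j - g j) = sumR m f - sumR m g.
Proof. induction m; simpl; [ring|]. rewrite IHm; ring. Qed.
Lemma sumR_scal_r m c f : sumR m (fun j => f j * c) = sumR m f * c.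
Proof. induction m; simpl; [ring|]. rewrite IHm; ring. Qed.
Lemma sumR_const m c : sumR m (fun _ => c) = INR m * c.
Proof. induction m; [simpl; ring|]. rewrite S_INR. simpl. rewrite IHm. ring. Qed.
Lemma sumR_dl_out m a f : (m <= a)%nat -> sumR m (fun l => dl a l * f l) = 0.
Proof.
  induction m; intros H; simpl; [auto|]. rewrite IHm by lia.
  unfold dl. replace (Nat.eqb a m) with false by (symmetry; apply Nat.eqb_neq; lia). ring.
Qed.
Lemma sumR_dl m a f : (a < m)%nat -> sumR m (fun l => dl a l * f l) = f a.
Proof.
  induction m; intros H; [lia|]. simpl.
  destruct (Nat.eq_dec a m) as [->|Hne].
  - rewrite sumR_dl_out by lia. rewrite dl_refl. ring.
  - rewrite IHm by lia. unfold dl. replace (Nat.eqb a m) with false by (symmetry; apply Nat.eqb_neq; lia). ring.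
Qed.
Lemma sumR_dl' m a f : (a < m)%nat -> sumR m (fun l => dl l a * f l) = f a.
Proof. intros H. rewrite <- (sumR_dl m a f H). apply sumR_ext. intros. rewrite dl_sym. auto. Qed.

Lemma upd_same x i s : upd x i s i = s.
Proof. unfold upd. rewrite Nat.eqb_refl. auto. Qed.
Lemma upd_other x i s j : j <> i -> upd x i s j = x j.
Proof. intros H. unfold upd. replace (Nat.eqb j i) with false by (symmetry; apply Nat.eqb_neq; auto). auto. Qed.

Lemma normsq_upd n x i s : (i < n)%nat -> normsq n (upd x i s) = normsq n x - x i ^ 2 + s ^ 2.
Proof.
  unfold normsq. induction n; intros H; [lia|]. cbn [sumR].
  destruct (Nat.eq_dec i n) as [->|Hne].
  - rewrite upd_same.
    replace (sumR n (fun i0 => upd x n s i0 ^ 2)) with (sumR n (fun i0 => x i0 ^ 2)). ring.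
    apply sumR_ext. intros. rewrite upd_other by lia. auto.
  - rewrite IHn by lia. rewrite upd_other by lia. ring.
Qed.

Lemma der_eq f t l : derivable_pt_lim f t l -> der f t = l.
Proof.
  intros H. unfold der.
  pose proof (epsilon_spec (inhabits 0) (fun l => derivable_pt_lim f t l) (ex_intro _ l H)) as H2.
  eapply uniqueness_limite; eauto.
Qed.

Lemma dlim_loc f g t l d : 0 < d -> (forall s, Rabs (s - t) < d -> f s = g s) ->
  derivable_pt_lim g t l -> derivable_pt_lim f t l.
Proof.
  intros Hd Heq H eps Heps. destruct (H eps Heps) as [del Hdel].
  assert (Hm : 0 < Rmin del d) by (apply Rmin_pos; [apply (cond_pos del)|auto]).
  exists (mkposreal _ Hm). intros h Hh Hhl. simpl in Hhl.
  rewrite (Heq t), (Heq (t + h)).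
  - apply Hdel; auto. apply Rlt_le_trans with (1 := Hhl). apply Rmin_l.
  - replace (t + h - t) with h by ring. apply Rlt_le_trans with (1 := Hhl). apply Rmin_r.
  - replace (t - t) with 0 by ring. rewrite Rabs_R0. auto.
Qed.

Lemma dlim_eq f t l l' : derivable_pt_lim f t l -> l = l' -> derivable_pt_lim f t l'.
Proof. intros H ->. auto. Qed.

Lemma dlim_fext f g t l : (forall s, f s = g s) -> derivable_pt_lim g t l -> derivable_pt_lim f t l.
Proof. intros H. replace f with g; auto. apply functional_extensionality; intros; auto. Qed.

Lemma dradial n x i Phi dPhi : (i < n)%nat ->
  derivable_pt_lim Phi (normsq n x) dPhi ->
  derivable_pt_lim (fun s => Phi (normsq n (upd x i s))) (x i) (dPhi * (2 * x i)).
Proof.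
  intros Hi H.
  apply dlim_fext with (g := fun s => Phi (normsq n x - x i ^ 2 + s ^ 2)).
  { intros s. rewrite normsq_upd; auto. }
  apply (derivable_pt_lim_comp (fun s => normsq n x - x i ^ 2 + s ^ 2) Phi).
  - apply dlim_eq with (l := 0 + INR 2 * x i ^ 1).
    + apply derivable_pt_lim_plus. apply derivable_pt_lim_const. apply derivable_pt_lim_pow.
    + simpl. ring.
  - replace (normsq n x - x i ^ 2 + x i ^ 2) with (normsq n x) by ring. auto.
Qed.

Lemma dcoord x a i : derivable_pt_lim (fun s => upd x a s i) (x a) (dl i a).
Proof.
  unfold upd, dl. destruct (Nat.eqb i a).
  - apply derivable_pt_lim_id.
  - apply derivable_pt_lim_const.
Qed.

Lemma upd_id x a i : upd x a (x a) i = x i.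
Proof. unfold upd. destruct (Nat.eqb_spec i a) as [->|]; auto. Qed.

Lemma normsq_upd_id n x a : (a < n)%nat -> normsq n (upd x a (x a)) = normsq n x.
Proof. intros H. rewrite normsq_upd by auto. ring. Qed.

Lemma near_pos n x a : (a < n)%nat -> 0 < normsq n x ->
  exists d, 0 < d /\ forall s, Rabs (s - x a) < d -> 0 < normsq n (upd x a s).
Proof.
  intros Ha HN.
  set (d := Rmin 1 (normsq n x / (2 * (2 * Rabs (x a) + 1)))).
  assert (Hpos : 0 < 2 * (2 * Rabs (x a) + 1)) by (pose proof (Rabs_pos (x a)); lra).
  assert (Hd : 0 < d) by (apply Rmin_pos; [lra| apply Rdiv_lt_0_compat; lra]).
  exists d. split; auto. intros s Hs.
  rewrite normsq_upd by auto.
  assert (H1 : Rabs (s - x a) < 1) by (apply Rlt_le_trans with d; auto; apply Rmin_l).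
  assert (H2 : Rabs (s - x a) * (2 * (2 * Rabs (x a) + 1)) <= normsq n x).
  { apply Rle_trans with (d * (2 * (2 * Rabs (x a) + 1))).
    - apply Rmult_le_compat_r; lra.
    - unfold d. apply Rle_trans with (normsq n x / (2 * (2 * Rabs (x a) + 1)) * (2 * (2 * Rabs (x a) + 1))).
      + apply Rmult_le_compat_r; [lra| apply Rmin_r].
      + right. field. lra. }
  assert (H3 : Rabs (s + x a) <= Rabs (s - x a) + 2 * Rabs (x a)).
  { replace (s + x a) with ((s - x a) + 2 * x a) by ring.
    eapply Rle_trans; [apply Rabs_triang|]. rewrite Rabs_mult, (Rabs_right 2) by lra. lra. }
  assert (H4 : Rabs (s ^ 2 - x a ^ 2) <= Rabs (s - x a) * (2 * Rabs (x a) + 1)).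
  { replace (s ^ 2 - x a ^ 2) with ((s - x a) * (s + x a)) by ring. rewrite Rabs_mult.
    apply Rmult_le_compat_l; [apply Rabs_pos|lra]. }
  pose proof (Rabs_pos (s - x a)).
  pose proof (Rle_abs (-(s ^ 2 - x a ^ 2))). rewrite Rabs_Ropp in H0.
  nra.
Qed.

Definition gr (n : nat) (Phi : R -> R) : metric :=
  fun y i j => if Nat.eqb i j then Phi (normsq n y) else 0.

Lemma pd_gr n Phi G x l i j : (l < n)%nat -> 0 < normsq n x ->
  (forall r, 0 < r -> derivable_pt_lim Phi r (Phi r * G r)) ->
  pd l (fun y => gr n Phi y i j) x = dl i j * (Phi (normsq n x) * G (normsq n x) * (2 * x l)).
Proof.
  intros Hl HN HP. unfold pd, gr, dl. apply der_eq. destruct (Nat.eqb i j).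
  - apply dlim_eq with (1 := dradial n x l Phi _ Hl (HP _ HN)). ring.
  - apply dlim_eq with (l := 0). apply derivable_pt_lim_const. ring.
Qed.

Lemma minv_gr n Phi x m l : 0 < Phi (normsq n x) -> (m < n)%nat -> (l < n)%nat ->
  minv n (gr n Phi x) m l = dl m l * / Phi (normsq n x).
Proof. intros HP Hm Hl. unfold gr. apply minv_diag; auto. lra. Qed.

Lemma Gam_gr n Phi G x m i j : 0 < normsq n x -> (m < n)%nat -> (i < n)%nat -> (j < n)%nat ->
  (forall r, 0 < r -> 0 < Phi r) ->
  (forall r, 0 < r -> derivable_pt_lim Phi r (Phi r * G r)) ->
  Gam n (gr n Phi) x m i j = G (normsq n x) * (dl j m * x i + dl i m * x j - dl i j * x m).
Proof.
  intros HN Hm Hi Hj HPp HP. unfold Gam.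
  set (P := Phi (normsq n x)). set (g0 := G (normsq n x)).
  assert (HP0 : 0 < P) by (apply HPp; auto).
  rewrite (sumR_ext _ _ (fun l => dl m l * (/ P * (dl j l * (P * g0 * (2 * x i)) + dl i l * (P * g0 * (2 * x j)) - dl i j * (P * g0 * (2 * x l)))))).
  - rewrite sumR_dl by auto. field. lra.
  - intros l Hl. rewrite minv_gr by auto. rewrite !(pd_gr n Phi G) by auto. fold P g0. ring.
Qed.

Lemma pdGam n Phi G G1 x a m i j : 0 < normsq n x -> (a < n)%nat -> (m < n)%nat -> (i < n)%nat -> (j < n)%nat ->
  (forall r, 0 < r -> 0 < Phi r) ->
  (forall r, 0 < r -> derivable_pt_lim Phi r (Phi r * G r)) ->
  (forall r, 0 < r -> derivable_pt_lim G r (G1 r)) ->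
  pd a (fun y => Gam n (gr n Phi) y m i j) x =
  G1 (normsq n x) * (2 * x a) * (dl j m * x i + dl i m * x j - dl i j * x m)
  + G (normsq n x) * (dl j m * dl i a + dl i m * dl j a - dl i j * dl m a).
Proof.
  intros HN Ha Hm Hi Hj HPp HP HG. unfold pd. apply der_eq.
  destruct (near_pos n x a Ha HN) as [d [Hd Hnear]].
  apply dlim_loc with (d := d) (g := fun s => G (normsq n (upd x a s)) *
        (dl j m * upd x a s i + dl i m * upd x a s j - dl i j * upd x a s m)); auto.
  { intros s Hs. apply Gam_gr; auto. }
  apply dlim_fext with (g := mult_fct (fun s => G (normsq n (upd x a s)))
        (fun s => dl j m * upd x a s i + dl i m * upd x a s j - dl i j * upd x a s m)).
  { intros s. reflexivity. }
  eapply dlim_eq.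
  - apply derivable_pt_lim_mult.
    + apply dradial; auto.
    + apply derivable_pt_lim_minus; [apply derivable_pt_lim_plus|];
        apply derivable_pt_lim_scal; apply dcoord.
  - cbv beta. rewrite !upd_id, normsq_upd_id by auto. ring.
Qed.

Lemma sumR_scal' m c f : sumR m (fun j => c * f j) = c * sumR m f.
Proof. apply sumR_scal. Qed.

Lemma T1 n x i j g0 g1 : (i < n)%nat -> (j < n)%nat ->
  sumR n (fun m => g1 * (2 * x m) * (dl j m * x i + dl i m * x j - dl i j * x m)
     + g0 * (dl j m * dl i m + dl i m * dl j m - dl i j * dl m m))
  = 2 * g1 * (x j * x i + x i * x j - dl i j * normsq n x) + g0 * (2 * dl i j - dl i j * INR n).
Proof.
  intros Hi Hj.
  rewrite (sumR_ext _ _ (fun m => (2 * g1 * x i) * (dl j m * x m) + (2 * g1 * x j) * (dl i m * x m)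
     - (2 * g1 * dl i j) * x m ^ 2 + (2 * g0) * (dl j m * dl i m) - g0 * dl i j)).
  2:{ intros m _. rewrite dl_refl. ring. }
  repeat rewrite ?sumR_minus, ?sumR_plus, ?sumR_scal'. rewrite sumR_const.
  rewrite !sumR_dl by auto. unfold normsq. ring.
Qed.

Lemma T2 n x i j g0 g1 :
  sumR n (fun m => g1 * (2 * x j) * (dl m m * x i + dl i m * x m - dl i m * x m)
     + g0 * (dl m m * dl i j + dl i m * dl m j - dl i m * dl m j))
  = INR n * (2 * g1 * x j * x i + g0 * dl i j).
Proof.
  rewrite (sumR_ext _ _ (fun m => 2 * g1 * x j * x i + g0 * dl i j)).
  2:{ intros m _. rewrite dl_refl. ring. }
  apply sumR_const.
Qed.

Lemma T3 n x i j g0 : (i < n)%nat -> (j < n)%nat ->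
  sumR n (fun m => sumR n (fun l => g0 * (dl l m * x m + dl m m * x l - dl m l * x m)
        * (g0 * (dl j l * x i + dl i l * x j - dl i j * x l))))
  = INR n * (g0 ^ 2 * (x i * x j + x j * x i - dl i j * normsq n x)).
Proof.
  intros Hi Hj.
  rewrite (sumR_ext _ _ (fun m => g0 ^ 2 * (x i * x j + x j * x i - dl i j * normsq n x))).
  { apply sumR_const. }
  intros m Hm.
  rewrite (sumR_ext _ _ (fun l => (g0 ^ 2 * x i) * (dl j l * x l) + (g0 ^ 2 * x j) * (dl i l * x l)
     - (g0 ^ 2 * dl i j) * x l ^ 2)).
  2:{ intros l _. rewrite dl_refl, (dl_sym m l). ring. }
  repeat rewrite ?sumR_minus, ?sumR_plus, ?sumR_scal'. rewrite !sumR_dl by auto. unfold normsq. ring.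
Qed.

Lemma T4 n x i j g0 : (i < n)%nat -> (j < n)%nat ->
  sumR n (fun m => sumR n (fun l => g0 * (dl l m * x j + dl j m * x l - dl j l * x m)
        * (g0 * (dl m l * x i + dl i l * x m - dl i m * x l))))
  = g0 ^ 2 * (INR n * (x i * x j) + x j * x i + x i * x j - dl i j * normsq n x - dl i j * normsq n x).
Proof.
  intros Hi Hj.
  rewrite (sumR_ext _ _ (fun m => g0 ^ 2 * (x i * x j) + (g0 ^ 2 * x i) * (dl j m * x m)
     + (g0 ^ 2 * x j) * (dl i m * x m) - (g0 ^ 2 * normsq n x) * (dl j m * dl i m) - (g0 ^ 2 * dl i j) * x m ^ 2)).
  { repeat rewrite ?sumR_minus, ?sumR_plus, ?sumR_scal'. rewrite sumR_const, !sumR_dl by auto.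
    unfold normsq. ring. }
  intros m Hm.
  rewrite (sumR_ext _ _ (fun l => dl l m * (g0 ^ 2 * (x j * dl m l * x i + x j * dl i l * x m - x j * dl i m * x l + dl j m * x l * x i))
     + dl i l * (g0 ^ 2 * (dl j m * x l * x m))
     + dl j l * (g0 ^ 2 * (- x m * dl m l * x i - x m * dl i l * x m + x m * dl i m * x l))
     + (- g0 ^ 2 * dl j m * dl i m) * x l ^ 2)).
  2:{ intros l _. replace (dl m l) with (dl l m) by apply dl_sym. ring. }
  repeat rewrite ?sumR_plus, ?sumR_scal'. rewrite sumR_dl' by auto. rewrite !sumR_dl by auto.
  fold (normsq n x). rewrite dl_refl, (dl_sym m j). ring.
Qed.

Lemma Ric_gr n Phi G G1 x i j : 0 < normsq n x -> (i < n)%nat -> (j < n)%nat ->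
  (forall r, 0 < r -> 0 < Phi r) ->
  (forall r, 0 < r -> derivable_pt_lim Phi r (Phi r * G r)) ->
  (forall r, 0 < r -> derivable_pt_lim G r (G1 r)) ->
  Ric n (gr n Phi) x i j =
  (INR n - 2) * (G (normsq n x) ^ 2 - 2 * G1 (normsq n x)) * x i * x j
  + dl i j * (- (2 * INR n - 2) * G (normsq n x) - 2 * G1 (normsq n x) * normsq n x
              - (INR n - 2) * G (normsq n x) ^ 2 * normsq n x).
Proof.
  intros HN Hi Hj HPp HP HG. unfold Ric.
  set (g0 := G (normsq n x)). set (g1 := G1 (normsq n x)).
  rewrite (sumR_ext _ _ (fun m =>
     (g1 * (2 * x m) * (dl j m * x i + dl i m * x j - dl i j * x m)
     + g0 * (dl j m * dl i m + dl i m * dl j m - dl i j * dl m m))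
   - (g1 * (2 * x j) * (dl m m * x i + dl i m * x m - dl i m * x m)
     + g0 * (dl m m * dl i j + dl i m * dl m j - dl i m * dl m j))
   + (sumR n (fun l => g0 * (dl l m * x m + dl m m * x l - dl m l * x m)
        * (g0 * (dl j l * x i + dl i l * x j - dl i j * x l)))
      - sumR n (fun l => g0 * (dl l m * x j + dl j m * x l - dl j l * x m)
        * (g0 * (dl m l * x i + dl i l * x m - dl i m * x l)))))).
  - rewrite sumR_plus, sumR_minus, sumR_minus, T1, T2, T3, T4 by auto. ring.
  - intros m Hm. rewrite !(pdGam n Phi G G1) by auto. f_equal.
    rewrite <- sumR_minus. apply sumR_ext. intros l Hl.
    rewrite !(Gam_gr n Phi G) by auto. reflexivity.
Qed.

Definition alph n (g0 g1 N : R) := - (2 * INR n - 2) * g0 - 2 * g1 * N - (INR n - 2) * g0 ^ 2 * N.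
Definition bet n (g0 g1 : R) := (INR n - 2) * (g0 ^ 2 - 2 * g1).

Lemma Scal_gr n Phi G G1 x : 0 < normsq n x ->
  (forall r, 0 < r -> 0 < Phi r) ->
  (forall r, 0 < r -> derivable_pt_lim Phi r (Phi r * G r)) ->
  (forall r, 0 < r -> derivable_pt_lim G r (G1 r)) ->
  Scal n (gr n Phi) x = / Phi (normsq n x) *
    (bet n (G (normsq n x)) (G1 (normsq n x)) * normsq n x
     + INR n * alph n (G (normsq n x)) (G1 (normsq n x)) (normsq n x)).
Proof.
  intros HN HPp HP HG. unfold Scal.
  assert (HP0 : 0 < Phi (normsq n x)) by auto.
  rewrite (sumR_ext _ _ (fun i => / Phi (normsq n x) *
     (bet n (G (normsq n x)) (G1 (normsq n x)) * x i ^ 2 + alph n (G (normsq n x)) (G1 (normsq n x)) (normsq n x)))).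
  - rewrite sumR_scal', sumR_plus, sumR_scal', sumR_const. unfold normsq. ring.
  - intros i Hi.
    rewrite (sumR_ext _ _ (fun j => dl i j * (/ Phi (normsq n x) * Ric n (gr n Phi) x i j))).
    + rewrite sumR_dl by auto. rewrite (Ric_gr n Phi G G1) by auto. rewrite dl_refl.
      unfold alph, bet. ring.
    + intros j Hj. rewrite minv_gr by auto. ring.
Qed.

Lemma gr_dl n Phi x l j : gr n Phi x l j = dl l j * Phi (normsq n x).
Proof. unfold gr, dl. destruct (Nat.eqb l j); ring. Qed.

Lemma Bmat_gr n Phi G G1 x cc Q i j : (3 <= n)%nat -> 0 < normsq n x -> (i < n)%nat -> (j < n)%nat ->
  (forall r, 0 < r -> 0 < Phi r) ->
  (forall r, 0 < r -> derivable_pt_lim Phi r (Phi r * G r)) ->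
  (forall r, 0 < r -> derivable_pt_lim G r (G1 r)) ->
  cc * Q * sumR n (fun l => minv n (gr n Phi x) i l * Schouten n (gr n Phi) x l j)
  = (if Nat.eqb i j then
       cc * Q / Phi (normsq n x) / (INR n - 2) *
       (alph n (G (normsq n x)) (G1 (normsq n x)) (normsq n x)
        - (bet n (G (normsq n x)) (G1 (normsq n x)) * normsq n x
           + INR n * alph n (G (normsq n x)) (G1 (normsq n x)) (normsq n x)) / (2 * (INR n - 1)))
     else 0)
    + cc * Q / Phi (normsq n x) / (INR n - 2) * bet n (G (normsq n x)) (G1 (normsq n x)) * x i * x j.
Proof.
  intros Hn HN Hi Hj HPp HP HG.
  assert (HP0 : 0 < Phi (normsq n x)) by auto.
  assert (Hn3 : 3 <= INR n) by (replace 3 with (INR 3) by (simpl; ring); apply le_INR; auto).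
  rewrite (sumR_ext _ _ (fun l => dl i l * (/ Phi (normsq n x) * Schouten n (gr n Phi) x l j))).
  2:{ intros l Hl. rewrite minv_gr by auto. ring. }
  rewrite sumR_dl by auto. unfold Schouten.
  rewrite (Ric_gr n Phi G G1) by auto. rewrite (Scal_gr n Phi G G1) by auto. rewrite gr_dl.
  fold (alph n (G (normsq n x)) (G1 (normsq n x)) (normsq n x)).
  fold (bet n (G (normsq n x)) (G1 (normsq n x))).
  unfold dl. destruct (Nat.eqb i j); field; repeat split; lra.
Qed.

Fixpoint binom (n k : nat) : nat :=
  match n, k with
  | _, O => 1%nat
  | O, S _ => 0%nat
  | S n', S k' => (binom n' k' + binom n' (S k'))%nat
  end.

Lemma binom_n0 n : binom n 0 = 1%nat.
Proof. destruct n; reflexivity. Qed.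

Lemma binom_rec n : forall k, (binom (S n) (S k) * S k = S n * binom n k)%nat.
Proof.
  induction n; intros k.
  - destruct k as [|[|k]]; simpl; try reflexivity.
  - change (binom (S (S n)) (S k)) with (binom (S n) k + binom (S n) (S k))%nat.
    destruct k.
    + pose proof (IHn 0%nat). rewrite binom_n0 in *. lia.
    + pose proof (IHn k). pose proof (IHn (S k)).
      change (binom (S n) (S k)) with (binom n k + binom n (S k))%nat in *.
      nia.
Qed.

Definition fsq (u : nat -> R) (l : list nat) : R := fold_right (fun a acc => u a ^ 2 + acc) 0 l.
Definition Fsum (u : nat -> R) (L : list (list nat)) : R := fold_right (fun S acc => fsq u S + acc) 0 L.

Lemma len_subsets l : forall k, length (subsets k l) = binom (length l) k.
Proof.
  induction l as [|a l IH]; intros k; destruct k; simpl; auto.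
  rewrite length_app, length_map, !IH. auto.
Qed.

Lemma Fsum_app u A B : Fsum u (A ++ B) = Fsum u A + Fsum u B.
Proof. induction A; simpl; [ring|]. rewrite IHA; ring. Qed.

Lemma Fsum_map u a L : Fsum u (map (cons a) L) = INR (length L) * u a ^ 2 + Fsum u L.
Proof. induction L; [simpl; ring|]. cbn [map length fold_right Fsum]. unfold Fsum in *. cbn [fold_right]. rewrite IHL. rewrite S_INR. unfold fsq; simpl. ring. Qed.

Lemma Fsum_subsets u l : forall k, Fsum u (subsets (S k) l) = INR (binom (pred (length l)) k) * fsq u l.
Proof.
  induction l as [|a l IH]; intros k.
  - simpl. unfold fsq; simpl. ring.
  - change (subsets (S k) (a :: l)) with (map (cons a) (subsets k l) ++ subsets (S k) l).
    rewrite Fsum_app, Fsum_map, IH, len_subsets.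
    simpl length. cbn [pred]. change (fsq u (a :: l)) with (u a ^ 2 + fsq u l).
    destruct k.
    + rewrite !binom_n0. replace (Fsum u (subsets 0 l)) with 0 by (destruct l; unfold Fsum, fsq; simpl; ring). simpl. ring.
    + rewrite IH. destruct l as [|b l'].
      * simpl. unfold fsq; simpl. ring.
      * simpl length. cbn [pred]. change (binom (S (length l')) (S k)) with (binom (length l') k + binom (length l') (S k))%nat.
        rewrite plus_INR. ring.
Qed.

Lemma subsets_prop l : forall k S, NoDup l -> In S (subsets k l) -> NoDup S /\ length S = k /\ incl S l.
Proof.
  induction l as [|a l IH]; intros k S Hl HS.
  - destruct k; simpl in HS; [|contradiction]. destruct HS as [<-|[]]. split; [constructor|split; [reflexivity|apply incl_nil_l]].
  - apply NoDup_cons_iff in Hl. destruct Hl as [Ha H2]. destruct k; simpl in HS.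
    + destruct HS as [<-|[]]. split; [constructor|split; [reflexivity|apply incl_nil_l]].
    + apply in_app_or in HS. destruct HS as [HS|HS].
      * apply in_map_iff in HS. destruct HS as [S' [<- HS']].
        destruct (IH _ _ H2 HS') as [H1 [H3 H4]]. split; [|split].
        -- constructor; auto.
        -- simpl; auto.
        -- intros x [<-|Hx]; [left; auto|right; auto].
      * destruct (IH _ _ H2 HS) as [H1 [H3 H4]]. split; [auto|split; [auto|]].
        intros x Hx; right; auto.
Qed.

Lemma sumR_nth_fsq u S : sumR (length S) (fun i => u (nth i S 0%nat) ^ 2) = fsq u S.
Proof.
  induction S as [|a S IH]; [reflexivity|].
  change (length (a :: S)) with (Datatypes.S (length S)). rewrite sumR_shift. cbn [nth]. rewrite IH. reflexivity.
Qed.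

Lemma fsq_seq u m : forall a, fsq u (seq a m) = sumR m (fun i => u (a + i)%nat ^ 2).
Proof.
  induction m; intros a; [reflexivity|]. rewrite sumR_shift. cbn [seq]. unfold fsq; cbn [fold_right]. fold (fsq u (seq (S a) m)).
  rewrite IHm. rewrite Nat.add_0_r. f_equal. apply sumR_ext. intros. f_equal. f_equal. lia.
Qed.

Lemma fold_ext_In (L : list (list nat)) (f g : list nat -> R) :
  (forall S, In S L -> f S = g S) ->
  fold_right (fun S acc => f S + acc) 0 L = fold_right (fun S acc => g S + acc) 0 L.
Proof.
  induction L; intros H; simpl; auto. rewrite H by (left; auto). rewrite IHL; auto.
  intros; apply H; right; auto.
Qed.

Lemma fold_lin u A B L : fold_right (fun S acc => A + B * fsq u S + acc) 0 L = INR (length L) * A + B * Fsum u L.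
Proof.
  induction L; [simpl; ring|]. cbn [fold_right length]. rewrite IHL. rewrite S_INR. unfold Fsum; cbn [fold_right]. ring.
Qed.

Lemma sigmak_rank1 n k lam mu u : lam <> 0 -> (1 <= k)%nat ->
  sigmak n k (fun i j => (if Nat.eqb i j then lam else 0) + mu * u i * u j)
  = INR (binom n k) * lam ^ k + mu * lam ^ (pred k) * INR (binom (pred n) (pred k)) * sumR n (fun i => u i ^ 2).
Proof.
  intros Hl Hk. unfold sigmak.
  rewrite (fold_ext_In _ _ (fun S => lam ^ k + mu * lam ^ (pred k) * fsq u S)).
  - rewrite fold_lin, len_subsets. unfold idx. rewrite length_seq.
    destruct k as [|k]; [lia|]. rewrite Fsum_subsets, length_seq, fsq_seq. cbn [pred Nat.add].
    ring.
  - intros S HS. destruct (subsets_prop _ _ _ (seq_NoDup n 0) HS) as [H1 [H2 _]].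
    rewrite MC.minor_rank1 by auto. rewrite sumR_nth_fsq, H2.
    destruct k; [lia|]. simpl pred. simpl pow. field. auto.
Qed.

Definition bb n k := 2 * INR k / (INR n - 2 * INR k).
Definition pp n k := 4 * INR k / (INR n - 2 * INR k).
Definition tt r := ln (sqrt r).
Definition PhiC n k (v : R -> R) r := Rpower (v (tt r)) (pp n k) * / r.
Definition GC n k (v v1 : R -> R) r := (bb n k * v1 (tt r) / v (tt r) - 1) / r.
Definition G1C n k (v v1 v2 : R -> R) r :=
  (bb n k * (v2 (tt r) * v (tt r) - v1 (tt r) ^ 2) / (2 * v (tt r) ^ 2)
   - (bb n k * v1 (tt r) / v (tt r) - 1)) / r ^ 2.

Module CQ.
From Coquelicot Require Import Coquelicot.

Lemma dPhi n k (v v1 : R -> R) r : 0 < r -> (forall t, 0 < v t) ->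
  (forall t, derivable_pt_lim v t (v1 t)) ->
  derivable_pt_lim (PhiC n k v) r (PhiC n k v r * GC n k v v1 r).
Proof.
  intros Hr Hv Hd. apply is_derive_Reals.
  assert (Hd' : forall t, is_derive v t (v1 t)) by (intros; apply is_derive_Reals; auto).
  unfold PhiC, GC, Rpower, tt.
  auto_derive.
  - repeat split; auto. eexists; apply Hd'. apply sqrt_lt_R0; auto. lra.
  - rewrite (is_derive_unique _ _ _ (Hd' _)).
    assert (Hs : sqrt r * sqrt r = r) by (apply sqrt_sqrt; lra).
    assert (Hs0 : 0 < sqrt r) by (apply sqrt_lt_R0; auto).
    specialize (Hv (ln (sqrt r))).
    replace (pp n k) with (2 * bb n k) by (unfold pp, bb, Rdiv; ring).
    set (E := exp _). set (V := v _) in *. set (V1 := v1 _) in *. set (sq := sqrt r) in *. rewrite <- Hs. assert (sq <> 0) by lra. assert (V <> 0) by lra. field; auto.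
Qed.

Lemma dG n k (v v1 v2 : R -> R) r : 0 < r -> (forall t, 0 < v t) ->
  (forall t, derivable_pt_lim v t (v1 t)) -> (forall t, derivable_pt_lim v1 t (v2 t)) ->
  derivable_pt_lim (GC n k v v1) r (G1C n k v v1 v2 r).
Proof.
  intros Hr Hv Hd Hd1. apply is_derive_Reals.
  assert (Hd' : forall t, is_derive v t (v1 t)) by (intros; apply is_derive_Reals; auto).
  assert (Hd1' : forall t, is_derive v1 t (v2 t)) by (intros; apply is_derive_Reals; auto).
  unfold GC, G1C, tt.
  auto_derive.
  - assert (0 < sqrt r) by (apply sqrt_lt_R0; auto). specialize (Hv (ln (sqrt r))).
    split. eexists; apply Hd1'. split. lra. split. lra. split. eexists; apply Hd'.
    split. lra. split. lra. split. lra. split. lra. trivial.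
  - rewrite (is_derive_unique _ _ _ (Hd' _)), (is_derive_unique _ _ _ (Hd1' _)).
    assert (Hs : sqrt r * sqrt r = r) by (apply sqrt_sqrt; lra).
    assert (Hs0 : 0 < sqrt r) by (apply sqrt_lt_R0; auto).
    specialize (Hv (ln (sqrt r))).
    set (V := v _) in *. set (V1 := v1 _) in *. set (V2 := v2 _) in *. set (sq := sqrt r) in *. rewrite <- Hs. assert (sq <> 0) by lra. assert (V <> 0) by lra. field; auto.
Qed.
End CQ.

Lemma alg_lam n k N V V1 V2 RP : 1 <= INR k -> 2 * INR k < INR n -> 0 < N -> 0 < V -> 0 < RP ->
  let b := bb n k in let cc := (INR n - 2 * INR k) / (2 * INR k) in
  let g0 := (b * V1 / V - 1) / N in
  let g1 := (b * (V2 * V - V1 ^ 2) / (2 * V ^ 2) - (b * V1 / V - 1)) / N ^ 2 in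
  cc * (RP * V ^ 2) / (RP * / N) / (INR n - 2) *
       (alph n g0 g1 N - (bet n g0 g1 * N + INR n * alph n g0 g1 N) / (2 * (INR n - 1)))
  = cc * (V ^ 2 - b ^ 2 * V1 ^ 2) / 2.
Proof.
  intros Hk Hn HN HV HRP b cc g0 g1. unfold g0, g1, b, cc, bb, alph, bet.
  field. repeat split; lra.
Qed.

Lemma alg_mu n k N V V1 V2 RP : 1 <= INR k -> 2 * INR k < INR n -> 0 < N -> 0 < V -> 0 < RP ->
  let b := bb n k in let cc := (INR n - 2 * INR k) / (2 * INR k) in
  let g0 := (b * V1 / V - 1) / N in
  let g1 := (b * (V2 * V - V1 ^ 2) / (2 * V ^ 2) - (b * V1 / V - 1)) / N ^ 2 in
  INR n / INR k * (cc * (V ^ 2 - b ^ 2 * V1 ^ 2) / 2)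
  + cc * (RP * V ^ 2) / (RP * / N) / (INR n - 2) * bet n g0 g1 * N
  = cc ^ 2 * V * (V - b ^ 2 * V2).
Proof.
  intros Hk Hn HN HV HRP b cc g0 g1. unfold g0, g1, b, cc, bb, alph, bet.
  field. repeat split; lra.
Qed.

Lemma gv_gr n k v : gv n k v = gr n (PhiC n k v).
Proof.
  extensionality y; extensionality i; extensionality j.
  unfold gv, gr, gcyl, PhiC, tcoord, tt, pp. destruct (Nat.eqb i j); ring.
Qed.

Lemma sigmak_ext n k M M' : (forall i j, (i < n)%nat -> (j < n)%nat -> M i j = M' i j) ->
  sigmak n k M = sigmak n k M'.
Proof.
  intros H. unfold sigmak. apply fold_ext_In. intros S HS.
  destruct (subsets_prop _ _ _ (seq_NoDup n 0) HS) as [_ [_ Hinc]].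
  apply detl_ext. intros r c Hr Hc.
  apply Hinc in Hr. apply Hinc in Hc. unfold idx in *. apply in_seq in Hr. apply in_seq in Hc.
  apply H; lia.
Qed.

Lemma Rpower_q n k V : 0 < V -> 2 * INR k < INR n ->
  Rpower V (2 * INR n / (INR n - 2 * INR k)) = Rpower V (pp n k) * V ^ 2.
Proof.
  intros HV Hn. replace (2 * INR n / (INR n - 2 * INR k)) with (pp n k + INR 2).
  - rewrite Rpower_plus, Rpower_pow; auto.
  - unfold pp. simpl. field. lra.
Qed.

Lemma binom_real n k : (1 <= k)%nat -> (k <= n)%nat ->
  INR (binom n k) = INR n / INR k * INR (binom (pred n) (pred k)).
Proof.
  intros Hk Hkn. destruct n as [|n]; [lia|]. destruct k as [|k]; [lia|]. cbn [pred].
  pose proof (binom_rec n k) as H. apply (f_equal INR) in H. rewrite !mult_INR in H.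
  assert (0 < INR (S k)) by (apply lt_0_INR; lia).
  field_simplify_eq; [|lra]. lra.
Qed.

Lemma binom_pos n k : (k <= n)%nat -> (0 < binom n k)%nat.
Proof.
  revert k; induction n; intros k Hk.
  - destruct k; [simpl; lia|lia].
  - destruct k; [simpl; lia|]. simpl. specialize (IHn k). lia.
Qed.

Lemma key n k v D x :
  (1 <= k)%nat -> (2 * k < n)%nat -> D 0%nat = v ->
  (forall m t, derivable_pt_lim (D m) t (D (S m) t)) -> (forall t, 0 < v t) ->
  0 < normsq n x ->
  0 < v (tcoord n x) ^ 2 - bb n k ^ 2 * D 1%nat (tcoord n x) ^ 2 ->
  sigmak n k (Bv n k v x) =
  ((INR n - 2 * INR k) / (2 * INR k) * (v (tcoord n x) ^ 2 - bb n k ^ 2 * D 1%nat (tcoord n x) ^ 2) / 2) ^ (pred k)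
  * INR (binom (pred n) (pred k))
  * (((INR n - 2 * INR k) / (2 * INR k)) ^ 2 * v (tcoord n x) * (v (tcoord n x) - bb n k ^ 2 * D 2%nat (tcoord n x))).
Proof.
  intros Hk Hkn HD0 HD Hv HN Hh.
  assert (Hk1 : 1 <= INR k) by (replace 1 with (INR 1) by reflexivity; apply le_INR; auto).
  assert (Hkn' : 2 * INR k < INR n) by (replace (2 * INR k) with (INR (2 * k)) by (rewrite mult_INR; reflexivity); apply lt_INR; auto).
  assert (Hn3 : (3 <= n)%nat) by lia.
  assert (Hd0 : forall t, derivable_pt_lim v t (D 1%nat t)) by (intros; rewrite <- HD0; apply HD).
  assert (Hd1 : forall t, derivable_pt_lim (D 1%nat) t (D 2%nat t)) by (intros; apply HD).
  assert (HPp : forall r, 0 < r -> 0 < PhiC n k v r).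
  { intros r Hr. unfold PhiC, Rpower. apply Rmult_lt_0_compat. apply exp_pos. apply Rinv_0_lt_compat; auto. }
  assert (HP : forall r, 0 < r -> derivable_pt_lim (PhiC n k v) r (PhiC n k v r * GC n k v (D 1%nat) r)).
  { intros r Hr. apply CQ.dPhi; auto. }
  assert (HG : forall r, 0 < r -> derivable_pt_lim (GC n k v (D 1%nat)) r (G1C n k v (D 1%nat) (D 2%nat) r)).
  { intros r Hr. apply CQ.dG; auto. }
  set (N := normsq n x) in *.
  set (V := v (tcoord n x)) in *. set (V1 := D 1%nat (tcoord n x)) in *. set (V2 := D 2%nat (tcoord n x)) in *.
  set (cc := (INR n - 2 * INR k) / (2 * INR k)).
  set (Q := Rpower V (2 * INR n / (INR n - 2 * INR k))).
  set (P := PhiC n k v N). set (g0 := GC n k v (D 1%nat) N). set (g1 := G1C n k v (D 1%nat) (D 2%nat) N).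
  set (Lam := cc * Q / P / (INR n - 2) * (alph n g0 g1 N - (bet n g0 g1 * N + INR n * alph n g0 g1 N) / (2 * (INR n - 1)))).
  set (Mu := cc * Q / P / (INR n - 2) * bet n g0 g1).
  rewrite (sigmak_ext n k _ (fun i j => (if Nat.eqb i j then Lam else 0) + Mu * x i * x j)).
  2:{ intros i j Hi Hj. unfold Bv. rewrite gv_gr. fold N.
      apply (Bmat_gr n (PhiC n k v) (GC n k v (D 1%nat)) (G1C n k v (D 1%nat) (D 2%nat))); auto. }
  assert (HRP : 0 < Rpower V (pp n k)) by (unfold Rpower; apply exp_pos).
  assert (HVpos : 0 < V) by apply Hv.
  assert (HLam : Lam = cc * (V ^ 2 - bb n k ^ 2 * V1 ^ 2) / 2).
  { unfold Lam, Q, P, g0, g1, PhiC, GC, G1C. rewrite Rpower_q by auto.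
    apply (alg_lam n k N V V1 V2); auto. }
  assert (HMu : INR n / INR k * Lam + Mu * N = cc ^ 2 * V * (V - bb n k ^ 2 * V2)).
  { rewrite HLam. unfold Mu, Q, P, g0, g1, PhiC, GC, G1C. rewrite Rpower_q by auto.
    apply (alg_mu n k N V V1 V2); auto. }
  assert (Hcc : 0 < cc) by (unfold cc; apply Rdiv_lt_0_compat; lra).
  assert (HLam0 : Lam <> 0) by (rewrite HLam; apply Rgt_not_eq; apply Rmult_lt_0_compat; [apply Rmult_lt_0_compat|]; lra).
  rewrite sigmak_rank1 by auto. change (sumR n (fun i => x i ^ 2)) with N.
  rewrite binom_real by lia. rewrite <- HLam, <- HMu.
  destruct k as [|k]; [lia|]. cbn [pred]. simpl pow. field. lra.
Qed.

Lemma cont_of_der f x l : derivable_pt_lim f x l ->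
  forall eps, 0 < eps -> exists d, 0 < d /\ forall y, Rabs (y - x) < d -> Rabs (f y - f x) < eps.
Proof.
  intros H eps Heps.
  assert (Hc : continuity_pt f x) by (apply derivable_continuous_pt; exists l; auto).
  destruct (Hc eps Heps) as [d [Hd Hy]]. exists d. split; auto. intros y Hyd.
  destruct (Req_dec y x) as [->|Hne].
  - replace (f x - f x) with 0 by ring. rewrite Rabs_R0; auto.
  - apply (Hy y). split. split; [exact I|auto]. simpl. unfold R_dist. auto.
Qed.

Lemma const_on f f' a b : a <= b -> (forall c, a <= c <= b -> derivable_pt_lim f c (f' c)) ->
  (forall c, a <= c <= b -> f' c = 0) -> f b = f a.
Proof.
  intros Hab Hd H0. destruct (Req_dec a b) as [->|Hne]; auto.
  destruct (MVT_cor2 f f' a b) as [c [Hc1 Hc2]]; auto. lra.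
  rewrite H0 in Hc1 by lra. lra.
Qed.

Lemma spread f f' : (forall t, derivable_pt_lim f t (f' t)) -> (forall t, 0 < f t -> f' t = 0) ->
  0 < f 0 -> forall t, 0 <= t -> f t = f 0.
Proof.
  intros Hd Hz Hpos t Ht.
  destruct (Req_dec (f t) (f 0)) as [E|Hne]; auto. exfalso.
  set (E := fun s => 0 <= s /\ forall r, 0 <= r <= s -> f r = f 0).
  assert (HEb : forall s, E s -> s < t).
  { intros s [Hs Hr]. destruct (Rlt_or_le s t) as [|Hts]; auto. exfalso. apply Hne. apply Hr. lra. }
  assert (Hb : bound E) by (exists t; intros s Hs; left; apply HEb; auto).
  assert (He : exists s, E s) by (exists 0; split; [lra|]; intros r Hr; replace r with 0 by lra; auto).
  destruct (completeness E Hb He) as [S [HS1 HS2]].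
  assert (HS0 : 0 <= S) by (apply HS1; destruct He as [s Hs]; split; [lra|]; intros r Hr; replace r with 0 by lra; auto).
  assert (Hbefore : forall r, 0 <= r < S -> f r = f 0).
  { intros r Hr. destruct (Rle_or_lt S r) as [Hc|Hc]; [lra|].
    assert (~ is_upper_bound E r).
    { intros Hub. specialize (HS2 r Hub). lra. }
    apply Classical_Pred_Type.not_all_ex_not in H. destruct H as [s Hs].
    apply Classical_Prop.imply_to_and in Hs. destruct Hs as [Hs1 Hs2].
    destruct Hs1 as [Hs0 Hsr]. apply Hsr. lra. }
  assert (HfS : f S = f 0).
  { destruct (Req_dec S 0) as [->|HS0']; auto.
    destruct (Req_dec (f S) (f 0)) as [|HneS]; auto. exfalso.
    destruct (cont_of_der f S (f' S) (Hd S) (Rabs (f S - f 0))) as [d [Hd0 Hdd]].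
    { apply Rabs_pos_lt. lra. }
    set (r := Rmax 0 (S - d / 2)).
    assert (Hr1 : 0 <= r) by apply Rmax_l.
    assert (Hr2 : r < S) by (unfold r; apply Rmax_lub_lt; lra).
    assert (Hr3 : Rabs (r - S) < d).
    { rewrite Rabs_left by lra. unfold r. pose proof (Rmax_r 0 (S - d / 2)). lra. }
    specialize (Hdd r Hr3). rewrite Hbefore in Hdd by lra.
    rewrite <- Rabs_Ropp in Hdd. replace (- (f 0 - f S)) with (f S - f 0) in Hdd by ring. lra. }
  destruct (cont_of_der f S (f' S) (Hd S) (f 0)) as [d [Hd0 Hdd]]; auto.
  assert (Hposc : forall c, 0 <= c <= S + d / 2 -> 0 < f c).
  { intros c Hc. destruct (Rlt_or_le c S) as [Hcs|Hcs].
    - rewrite Hbefore by lra. auto.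
    - assert (Rabs (c - S) < d) by (rewrite Rabs_right by lra; lra).
      specialize (Hdd c H). rewrite HfS in Hdd.
      pose proof (Rle_abs (f 0 - f c)). rewrite <- Rabs_Ropp in Hdd.
      replace (- (f c - f 0)) with (f 0 - f c) in Hdd by ring. lra. }
  assert (HE : E (S + d / 2)).
  { split; [lra|]. intros r Hr. apply (const_on f f' 0 r); try lra.
    - intros c Hc. apply Hd.
    - intros c Hc. apply Hz. apply Hposc. lra. }
  specialize (HS1 _ HE). lra.
Qed.

Lemma const_glob f : (forall t, derivable_pt_lim f t 0) -> forall t, f t = f 0.
Proof.
  intros H t. destruct (Rle_or_lt 0 t) as [Ht|Ht].
  - apply (const_on f (fun _ => 0)); auto.
  - symmetry. apply (const_on f (fun _ => 0)); auto; lra.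
Qed.

Module CQ2.
From Coquelicot Require Import Coquelicot.

Lemma ode_sol (v v1 v2 : R -> R) a : a <> 0 ->
  (forall t, derivable_pt_lim v t (v1 t)) -> (forall t, derivable_pt_lim v1 t (v2 t)) ->
  (forall t, v2 t = a ^ 2 * v t) ->
  forall t, v t = (v 0 + v1 0 / a) / 2 * exp (a * t) + (v 0 - v1 0 / a) / 2 * exp (- a * t).
Proof.
  intros Ha Hd Hd1 Hode.
  assert (Hd' : forall t, is_derive v t (v1 t)) by (intros; apply is_derive_Reals; auto).
  assert (Hd1' : forall t, is_derive v1 t (v2 t)) by (intros; apply is_derive_Reals; auto).
  set (A := (v 0 + v1 0 / a) / 2). set (B := (v 0 - v1 0 / a) / 2).
  set (z := fun t => (v1 t - (A * a * exp (a * t) - B * a * exp (- a * t))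
                      - a * (v t - (A * exp (a * t) + B * exp (- a * t)))) * exp (a * t)).
  assert (Hz : forall t, z t = 0).
  { intros t. rewrite (const_glob z).
    - unfold z. rewrite !Rmult_0_r, exp_0. unfold A, B. field. auto.
    - intros s. apply is_derive_Reals. unfold z. auto_derive.
      + repeat split; eexists; eauto.
      + rewrite (is_derive_unique _ _ _ (Hd' _)), (is_derive_unique _ _ _ (Hd1' _)), Hode. ring. }
  assert (Hw : forall t, v1 t - (A * a * exp (a * t) - B * a * exp (- a * t))
                         = a * (v t - (A * exp (a * t) + B * exp (- a * t)))).
  { intros t. specialize (Hz t). unfold z in Hz.
    apply Rmult_integral in Hz. destruct Hz as [Hz|Hz].
    - lra.
    - exfalso. pose proof (exp_pos (a * t)). lra. }
  set (y := fun t => (v t - (A * exp (a * t) + B * exp (- a * t))) * exp (- a * t)).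
  assert (Hy : forall t, y t = 0).
  { intros t. rewrite (const_glob y).
    - unfold y. rewrite !Rmult_0_r, exp_0. unfold A, B. field. auto.
    - intros s. apply is_derive_Reals. unfold y. auto_derive.
      + eexists; eauto.
      + rewrite (is_derive_unique _ _ _ (Hd' _)).
        specialize (Hw s). replace (v1 s) with (a * (v s - (A * exp (a * s) + B * exp (- a * s))) + (A * a * exp (a * s) - B * a * exp (- a * s))) by lra.
        ring. }
  intros t. specialize (Hy t). unfold y in Hy. apply Rmult_integral in Hy. destruct Hy as [Hy|Hy].
  - lra.
  - exfalso. pose proof (exp_pos (- a * t)). lra.
Qed.

End CQ2.

Lemma cosh_form v0 u a : 0 < v0 ^ 2 - u ^ 2 -> 0 < v0 ->
  exists c, forall t, (v0 + u) / 2 * exp (a * t) + (v0 - u) / 2 * exp (- a * t)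
                = sqrt (v0 ^ 2 - u ^ 2) * cosh (a * t - c).
Proof.
  intros Hh Hv.
  assert (HB : 0 < v0 - u).
  { destruct (Rle_or_lt (v0 - u) 0) as [H|H]; auto. assert (0 <= (u - v0) * (u + v0)) by (apply Rmult_le_pos; lra). nra. }
  assert (HA : 0 < v0 + u).
  { destruct (Rle_or_lt (v0 + u) 0) as [H|H]; auto. assert (0 <= (- u - v0) * (- u + v0)) by (apply Rmult_le_pos; lra). nra. }
  set (h0 := v0 ^ 2 - u ^ 2) in *.
  assert (Hs : 0 < sqrt h0) by (apply sqrt_lt_R0; auto).
  assert (Hss : sqrt h0 * sqrt h0 = h0) by (apply sqrt_sqrt; lra).
  exists (ln (2 * ((v0 - u) / 2) / sqrt h0)). intros t.
  set (c := ln (2 * ((v0 - u) / 2) / sqrt h0)).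
  assert (Hc : exp c = 2 * ((v0 - u) / 2) / sqrt h0) by (apply exp_ln; apply Rdiv_lt_0_compat; lra).
  unfold cosh. replace (- (a * t - c)) with (- a * t + c) by ring. replace (a * t - c) with (a * t + - c) by ring.
  rewrite !exp_plus, exp_Ropp, Hc.
  set (E := exp (a * t)). set (E' := exp (- a * t)). set (s := sqrt h0) in *.
  transitivity ((s * s) / (2 * (v0 - u)) * E + (v0 - u) / 2 * E').
  - rewrite Hss. unfold h0. field. lra.
  - field. lra.
Qed.

Module CQ3.
From Coquelicot Require Import Coquelicot.
Lemma dh (v v1 v2 : R -> R) b t :
  (forall t, derivable_pt_lim v t (v1 t)) -> (forall t, derivable_pt_lim v1 t (v2 t)) ->
  derivable_pt_lim (fun t => v t ^ 2 - b ^ 2 * v1 t ^ 2) t (2 * v1 t * (v t - b ^ 2 * v2 t)).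
Proof.
  intros Hd Hd1. apply is_derive_Reals.
  assert (Hd' : forall t, is_derive v t (v1 t)) by (intros; apply is_derive_Reals; auto).
  assert (Hd1' : forall t, is_derive v1 t (v2 t)) by (intros; apply is_derive_Reals; auto).
  auto_derive.
  - repeat split; eexists; eauto.
  - rewrite (is_derive_unique _ _ _ (Hd' _)), (is_derive_unique _ _ _ (Hd1' _)). ring.
Qed.

Lemma dneg (f : R -> R) f' t : (forall t, derivable_pt_lim f t (f' t)) ->
  derivable_pt_lim (fun s => f (- s)) t (- f' (- t)).
Proof.
  intros Hd. apply is_derive_Reals.
  assert (Hd' : forall t, is_derive f t (f' t)) by (intros; apply is_derive_Reals; auto).
  auto_derive.
  - eexists; eauto.
  - rewrite (is_derive_unique _ _ _ (Hd' _)). ring.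
Qed.

Lemma dcosh A a c t : derivable_pt_lim (fun t => A * cosh (a * t - c)) t (A * a * sinh (a * t - c)).
Proof.
  apply is_derive_Reals. unfold cosh, sinh. auto_derive; auto. unfold Rminus. field.
Qed.
Lemma dsinh A a c t : derivable_pt_lim (fun t => A * sinh (a * t - c)) t (A * a * cosh (a * t - c)).
Proof.
  apply is_derive_Reals. unfold cosh, sinh. auto_derive; auto. unfold Rminus. field.
Qed.
End CQ3.

Lemma normsq_e0 n a : (1 <= n)%nat -> normsq n (fun i => if Nat.eqb i 0 then a else 0) = a ^ 2.
Proof.
  intros Hn. unfold normsq. induction n; [lia|]. cbn [sumR].
  destruct n.
  - simpl. ring.
  - rewrite IHn by lia. replace (Nat.eqb (S n) 0) with false by reflexivity. ring.
Qed.

Lemma cosh_sinh x : cosh x ^ 2 - sinh x ^ 2 = 1.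
Proof.
  unfold cosh, sinh. assert (exp x * exp (- x) = 1) by (rewrite <- exp_plus; replace (x + - x) with 0 by ring; apply exp_0).
  rewrite <- H. field.
Qed.

Theorem proposition2p1 (n k : nat) (v : R -> R)
  (hk : (1 <= k)%nat) (hkn : (2 * k < n)%nat)
  (hsmooth : smooth v) (hpos : forall t, 0 < v t)
  (hh0 : 0 < hfun n k v 0) :
  (forall x : vec, 0 < normsq n x -> sigmak n k (Bv n k v x) = 0) <->
  exists c : R, forall t : R,
    v t = sqrt (hfun n k v 0)
          * cosh ((INR n - 2 * INR k) / (2 * INR k) * t - c).
Proof.
  destruct hsmooth as [D [HD0 HD]].
  assert (Hk1 : 1 <= INR k) by (replace 1 with (INR 1) by reflexivity; apply le_INR; auto).
  assert (Hkn' : 2 * INR k < INR n) by (replace (2 * INR k) with (INR (2 * k)) by (rewrite mult_INR; reflexivity); apply lt_INR; auto).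
  set (cc := (INR n - 2 * INR k) / (2 * INR k)).
  assert (Hcc : 0 < cc) by (unfold cc; apply Rdiv_lt_0_compat; lra).
  assert (Hbc : bb n k * cc = 1) by (unfold bb, cc; field; lra).
  assert (Hd0 : forall t, derivable_pt_lim v t (D 1%nat t)) by (intros; rewrite <- HD0; apply HD).
  assert (Hd1 : forall t, derivable_pt_lim (D 1%nat) t (D 2%nat t)) by (intros; apply HD).
  assert (Hh : forall t, hfun n k v t = v t ^ 2 - bb n k ^ 2 * D 1%nat t ^ 2).
  { intros t. unfold hfun. rewrite (der_eq _ _ _ (Hd0 t)). reflexivity. }
  assert (Hbinom : 0 < INR (binom (pred n) (pred k))) by (apply lt_0_INR; apply binom_pos; lia).
  split.
  - intros Hs.
    assert (F1 : forall t, 0 < hfun n k v t -> v t - bb n k ^ 2 * D 2%nat t = 0).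
    { intros t Ht. rewrite Hh in Ht.
      set (x := fun i => if Nat.eqb i 0 then exp t else 0).
      assert (HN : normsq n x = exp t ^ 2) by (apply normsq_e0; lia).
      assert (HN0 : 0 < normsq n x) by (rewrite HN; pose proof (exp_pos t); nra).
      assert (Htc : tcoord n x = t).
      { unfold tcoord. rewrite HN, sqrt_pow2 by (left; apply exp_pos). apply ln_exp. }
      pose proof (key n k v D x hk hkn HD0 HD hpos HN0) as Hkey.
      rewrite Htc in Hkey. specialize (Hkey Ht). rewrite (Hs x HN0) in Hkey. fold cc in Hkey.
      symmetry in Hkey. apply Rmult_integral in Hkey. destruct Hkey as [Hkey|Hkey].
      - exfalso. apply Rmult_integral in Hkey. destruct Hkey as [Hkey|Hkey]; [|lra].
        apply (pow_nonzero (cc * (v t ^ 2 - bb n k ^ 2 * D 1%nat t ^ 2) / 2) (pred k)); auto.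
        apply Rgt_not_eq. apply Rdiv_lt_0_compat; [apply Rmult_lt_0_compat|]; lra.
      - apply Rmult_integral in Hkey. destruct Hkey as [Hkey|Hkey]; auto.
        exfalso. pose proof (hpos t). apply Rmult_integral in Hkey. destruct Hkey as [Hkey|Hkey]; [|lra].
        nra. }
    set (h := fun t => v t ^ 2 - bb n k ^ 2 * D 1%nat t ^ 2).
    set (h' := fun t => 2 * D 1%nat t * (v t - bb n k ^ 2 * D 2%nat t)).
    assert (Hdh : forall t, derivable_pt_lim h t (h' t)) by (intros; apply CQ3.dh; auto).
    assert (Hz : forall t, 0 < h t -> h' t = 0).
    { intros t Ht. unfold h'. rewrite F1. ring. rewrite Hh. auto. }
    assert (Hh0 : 0 < h 0) by (unfold h; rewrite <- Hh; auto).
    assert (F2 : forall t, h t = h 0).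
    { intros t. destruct (Rle_or_lt 0 t) as [Ht|Ht].
      - apply (spread h h'); auto.
      - set (f := fun s => h (- s)). set (f' := fun s => - h' (- s)).
        assert (Hf : f (- t) = f 0).
        { apply (spread f f'); try lra.
          - intros s. apply CQ3.dneg. auto.
          - intros s Hs'. unfold f'. rewrite Hz; [ring|auto].
          - unfold f. rewrite Ropp_0. auto. }
        unfold f in Hf. rewrite Ropp_involutive, Ropp_0 in Hf. auto. }
    assert (F3 : forall t, D 2%nat t = cc ^ 2 * v t).
    { intros t. assert (Ht : 0 < hfun n k v t) by (rewrite Hh; fold (h t); rewrite F2; auto).
      pose proof (F1 t Ht).
      replace (cc ^ 2 * v t) with (cc ^ 2 * (bb n k ^ 2 * D 2%nat t)) by (rewrite <- (Rplus_0_r (bb n k ^ 2 * D 2%nat t)); rewrite <- H; ring).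
      replace (cc ^ 2 * (bb n k ^ 2 * D 2%nat t)) with ((bb n k * cc) ^ 2 * D 2%nat t) by ring.
      rewrite Hbc. ring. }
    pose proof (CQ2.ode_sol v (D 1%nat) (D 2%nat) cc ltac:(lra) Hd0 Hd1 F3) as F4.
    assert (Hh0' : hfun n k v 0 = v 0 ^ 2 - (D 1%nat 0 / cc) ^ 2).
    { rewrite Hh. replace (bb n k) with (/ cc) by (field_simplify_eq; [lra|]; lra). field. lra. }
    destruct (cosh_form (v 0) (D 1%nat 0 / cc) cc) as [c Hc].
    { rewrite <- Hh0'. auto. }
    { apply hpos. }
    exists c. intros t. rewrite F4, Hc, Hh0'. fold cc. reflexivity.
  - intros [c Hc] x HN.
    set (h0 := hfun n k v 0) in *.
    set (A := sqrt h0).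
    assert (Hv : v = fun t => A * cosh (cc * t - c)) by (extensionality t; apply Hc).
    assert (HD1 : forall t, D 1%nat t = A * cc * sinh (cc * t - c)).
    { intros t. eapply uniqueness_limite. apply (Hd0 t). rewrite Hv. apply CQ3.dcosh. }
    assert (HD1f : D 1%nat = fun t => A * cc * sinh (cc * t - c)) by (extensionality t; apply HD1).
    assert (HD2 : forall t, D 2%nat t = A * cc * cc * cosh (cc * t - c)).
    { intros t. eapply uniqueness_limite. apply (Hd1 t). rewrite HD1f. apply CQ3.dsinh. }
    assert (HA : A * A = h0) by (apply sqrt_sqrt; lra).
    set (t := tcoord n x).
    assert (Hht : v t ^ 2 - bb n k ^ 2 * D 1%nat t ^ 2 = h0).
    { rewrite HD1, Hc. fold cc. fold A.
      replace (A * cosh (cc * t - c)) with (A * cosh (cc * t - c)) by reflexivity.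
      pose proof (cosh_sinh (cc * t - c)).
      replace (bb n k ^ 2 * (A * cc * sinh (cc * t - c)) ^ 2) with ((bb n k * cc) ^ 2 * A ^ 2 * sinh (cc * t - c) ^ 2) by ring.
      rewrite Hbc. rewrite <- HA. replace ((A * cosh (cc * t - c)) ^ 2) with (A ^ 2 * cosh (cc * t - c) ^ 2) by ring.
      replace (A ^ 2) with (A * A) by ring.
      transitivity (A * A * (cosh (cc * t - c) ^ 2 - sinh (cc * t - c) ^ 2)); [ring|]. rewrite H. ring. }
    rewrite (key n k v D x hk hkn HD0 HD hpos HN).
    2:{ fold t. rewrite Hht. auto. }
    fold t. rewrite HD2, Hc. fold cc. fold A.
    replace (A * cosh (cc * t - c) - bb n k ^ 2 * (A * cc * cc * cosh (cc * t - c)))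
      with (A * cosh (cc * t - c) * (1 - (bb n k * cc) ^ 2)) by ring.
    rewrite Hbc. ring.
Qed.
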